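(* Let $G=(V,R,E)$ be a finite bipartite version–record graph with version tree $\mathbb{T}$ satisfying the standing assumptions below, and let $0<\delta\le1$. Then the algorithm LyreSplit with parameter $\delta$ (described below) outputs a partition of $V$ into blocks $\mathcal{V}_1,\dots,\mathcal{V}_K$ whose storage cost satisfies $\mathcal{S}=\sum_k|\mathcal{R}_k|\le(1+\delta)^{\ell}|R|$ and whose average checkout cost satisfies $\mathcal{C}_{avg}=\frac{1}{|V|}\sum_k|\mathcal{V}_k||\mathcal{R}_k|\le\frac{1}{\delta}\cdot\frac{|E|}{|V|}$; i.e., it is a $((1+\delta)^{\ell},\frac1\delta)$-approximation, where $\ell$ is the recursion level at which the algorithm terminates.
   Context: $(v,r)\in E$ means version $v$ contains record $r$; $R(v)=\{r:(v,r)\in E\}$ and $R=\bigcup_v R(v)$. $\mathbb{T}$ is a rooted tree on $V$ (edges parent$\to$child) with edge weights $w(v_i,v_j)=|R(v_i)\cap R(v_j)|$. Standing assumption (no cross-version diff rule): for every record $r$, the set of versions containing $r$ is a connected subtree of $\mathbb{T}$. For a block $\mathcal{V}_k$, $\mathcal{R}_k=\bigcup_{v\in\mathcal{V}_k}R(v)$. LyreSplit on a subtree with version set $V'$, record set $R'=\bigcup_{v\in V'}R(v)$ and bipartite edge count $|E'|=\sum_{v\in V'}|R(v)|$: if $|R'||V'|<|E'|/\delta$, return $V'$ as a single block; otherwise pick any tree edge $e$ of the subtree with $w(e)\le\delta|R'|$ (such an edge exists), remove it to split the subtree into two subtrees, and recursively apply LyreSplit to each, returning the union of the resulting blocks. The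 initial call on the whole tree is at recursion level $0$, and its recursive calls are at level $1$, etc.; $\ell$ denotes the largest recursion level reached. An algorithm is an $(X,Y)$-approximation if its storage cost is at most $X\cdot|R|$ and its average checkout cost is at most $Y\cdot\frac{|E|}{|V|}$. *)

(* Defs.v *)
From HB Require Import structures.
From mathcomp Require Import all_boot all_order all_algebra.
Set Implicit Arguments. Unset Strict Implicit. Unset Printing Implicit Defensive.
Import Order.TTheory GRing.Theory Num.Theory.
Local Open Scope ring_scope.

(* Versions: finite type Vt; records: finite type Rc;
   bipartite edge set E : {set Vt * Rc}  ((v,r) \in E  <=>  version v contains r).
   Version tree: edge relation T (parent -> child) on Vt. *)

Section VersionGraph.
Variables (Vt Rc : finType).

Definition is_rooted_tree (T : rel Vt) (root : Vt) : Prop :=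
  [/\ forall u, ~~ T u root,
      forall v, v != root -> #|[set u | T u v]| = 1%N
    & forall v, connect T root v].

Definition tree_rel_on (T : rel Vt) (S : {set Vt}) : rel Vt :=
  [rel x y | [&& x \in S, y \in S & T x y || T y x]].

Definition tree_connected (T : rel Vt) (S : {set Vt}) : Prop :=
  forall x y, x \in S -> y \in S -> connect (tree_rel_on T S) x y.

Variable E : {set Vt * Rc}.

Definition recs (v : Vt) : {set Rc} := [set r | (v, r) \in E].
Definition recs_of (S : {set Vt}) : {set Rc} := \bigcup_(v in S) recs v.
Definition nedges (S : {set Vt}) : nat := (\sum_(v in S) #|recs v|)%N.
Definition wt (u v : Vt) : nat := #|recs u :&: recs v|.

Definition cut_rel (T : rel Vt) (S : {set Vt}) (u v : Vt) : rel Vt :=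
  [rel x y | tree_rel_on T S x y &&
             ~~ (((x == u) && (y == v)) || ((x == v) && (y == u)))].
Definition side_v (T : rel Vt) (S : {set Vt}) (u v : Vt) : {set Vt} :=
  [set x in S | connect (cut_rel T S u v) v x].
Definition side_u (T : rel Vt) (S : {set Vt}) (u v : Vt) : {set Vt} :=
  S :\: side_v T S u v.

Variable F : realFieldType.
Variable T : rel Vt.
Variable delta : F.

Definition stop_cond (S : {set Vt}) : bool :=
  (#|recs_of S|%:R * #|S|%:R < (nedges S)%:R / delta).

(* lyre S n blocks l : a (nondeterministic) run of LyreSplit on the subtree with
   version set S, called at recursion level n, returns [blocks], and the largest
   recursion level reached during this call is l. *)
Inductive lyre : {set Vt} -> nat -> seq {set Vt} -> nat -> Prop :=
| lyre_stop S n : stop_cond S -> lyre S n [:: S] n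
| lyre_split S n u v b1 l1 b2 l2 :
    ~~ stop_cond S ->
    u \in S -> v \in S -> T u v ->
    (wt u v)%:R <= delta * #|recs_of S|%:R ->
    lyre (side_u T S u v) n.+1 b1 l1 ->
    lyre (side_v T S u v) n.+1 b2 l2 ->
    lyre S n (b1 ++ b2) (maxn l1 l2).

End VersionGraph.

Definition storage_cost (Vt Rc : finType) (E : {set Vt * Rc}) (bs : seq {set Vt}) : nat :=
  (\sum_(B <- bs) #|recs_of E B|)%N.
Definition checkout_total (Vt Rc : finType) (E : {set Vt * Rc}) (bs : seq {set Vt}) : nat :=
  (\sum_(B <- bs) #|B| * #|recs_of E B|)%N.
Definition all_recs (Vt Rc : finType) (E : {set Vt * Rc}) : {set Rc} :=
  recs_of E [set: Vt].

(* Main.v *)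
Require Import Defs.
From HB Require Import structures.
From mathcomp Require Import all_boot all_order all_algebra.
Import Order.TTheory GRing.Theory Num.Theory.
Local Open Scope ring_scope.

Set Implicit Arguments. Unset Strict Implicit.

Section Aux.
Variables (Vt Rc : finType) (T : rel Vt).

Lemma tree_rel_sym (A : {set Vt}) : symmetric (tree_rel_on T A).
Proof. by move=> x y; rewrite /tree_rel_on /= andbCA orbC. Qed.

Lemma generic (A P : {set Vt}) w x y :
  (forall z z', z \in A :&: P -> z' \in A -> tree_rel_on T A z z' ->
     z' \notin P -> z = w) ->
  x \in A :&: P -> connect (tree_rel_on T A) x y ->
  (y \in P /\ connect (tree_rel_on T (A :&: P)) x y) \/
  (w \in A :&: P /\ connect (tree_rel_on T (A :&: P)) x w).
Proof.
move=> H xAP /connectP [p pth ->] {y}.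
elim/last_ind: p pth => [|p z IH] /=.
  move=> _; left; split; last exact: connect0.
  by move: xAP; rewrite inE => /andP[].
rewrite rcons_path => /andP [pth ez]; rewrite last_rcons.
case: (IH pth) => [[]|]; last by right.
move: (last x p) ez => y ez yP cxy.
have yA : y \in A by move: ez => /and3P[].
have zA : z \in A by move: ez => /and3P[].
case zP: (z \in P).
  left; split=> //; apply: connect_trans cxy (connect1 _).
  by rewrite /tree_rel_on /= !inE yA yP zA zP /=; move: ez => /and3P[].
right; have := H y z; rewrite inE yA yP zA zP => /(_ isT isT ez isT) <-.
by split=> //; rewrite inE yA.
Qed.

Lemma conn_sub (A P : {set Vt}) w x y :
  (forall z z', z \in A :&: P -> z' \in A -> tree_rel_on T A z z' ->
     z' \notin P -> z = w) ->
  x \in A :&: P -> y \in A :&: P -> connect (tree_rel_on T A) x y ->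
  connect (tree_rel_on T (A :&: P)) x y.
Proof.
move=> H xP yP cxy.
have syA := sym_connect_sym (tree_rel_sym A).
have syP := sym_connect_sym (tree_rel_sym (A :&: P)).
case: (generic H xP cxy) => [[_ c]|[_ cxw]] //.
have cyx : connect (tree_rel_on T A) y x by rewrite syA.
case: (generic H yP cyx) => [[_ c]|[_ cyw]]; first by rewrite syP.
by apply: connect_trans cxw _; rewrite syP.
Qed.

Definition convex_inv (S : {set Vt}) :=
  forall Q, tree_connected T Q -> tree_connected T (Q :&: S).

Variables (S : {set Vt}) (u v : Vt).
Hypotheses (uS : u \in S) (vS : v \in S) (Tuv : T u v).

Lemma cut_sym : symmetric (cut_rel T S u v).
Proof.
move=> x y; rewrite /cut_rel /= tree_rel_sym.
by case: (x == u); case: (x == v); case: (y == u); case: (y == v).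
Qed.

Lemma side_v_sub : side_v T S u v \subset S.
Proof. by apply/subsetP => x; rewrite inE => /andP[]. Qed.

Lemma side_u_sub : side_u T S u v \subset S.
Proof. exact: subsetDl. Qed.

Lemma v_side_v : v \in side_v T S u v.
Proof. by rewrite inE vS connect0. Qed.

Lemma H_v (A : {set Vt}) : A \subset S ->
  forall z z', z \in A :&: side_v T S u v -> z' \in A -> tree_rel_on T A z z' ->
     z' \notin side_v T S u v -> z = v.
Proof.
move=> AS z z'; rewrite inE => /andP[zA zv] z'A ez nz'.
have zS := subsetP AS _ zA; have z'S := subsetP AS _ z'A.
move: zv; rewrite inE => /andP[_ cz].
case pr: (((z == u) && (z' == v)) || ((z == v) && (z' == u))).
  case/orP: pr => /andP[/eqP -> /eqP e]; last by [].
  by move: nz'; rewrite e v_side_v.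
have cz' : cut_rel T S u v z z'.
  by rewrite /cut_rel /= pr andbT /tree_rel_on /= zS z'S; move: ez => /and3P[].
by move: nz'; rewrite inE z'S (connect_trans cz (connect1 cz')).
Qed.

Lemma H_u (A : {set Vt}) : A \subset S ->
  forall z z', z \in A :&: side_u T S u v -> z' \in A -> tree_rel_on T A z z' ->
     z' \notin side_u T S u v -> z = u.
Proof.
move=> AS z z'; rewrite inE => /andP[zA zu] z'A ez nz'.
have zS := subsetP AS _ zA; have z'S := subsetP AS _ z'A.
move: nz'; rewrite /side_u inE z'S andbT negbK inE z'S /= => cz'.
move: zu; rewrite /side_u inE zS andbT inE zS /= => ncz.
case pr: (((z == u) && (z' == v)) || ((z == v) && (z' == u))).
  case/orP: pr => /andP[/eqP e _] //.
  by move: ncz; rewrite e connect0.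
have cz : cut_rel T S u v z' z.
  by rewrite cut_sym /cut_rel /= pr andbT /tree_rel_on /= zS z'S; move: ez => /and3P[].
by move: ncz; rewrite (connect_trans cz' (connect1 cz)).
Qed.

Lemma inv_side_v : convex_inv S -> convex_inv (side_v T S u v).
Proof.
move=> hS Q hQ x y.
have -> : Q :&: side_v T S u v = (Q :&: S) :&: side_v T S u v.
  by rewrite -setIA (setIidPr side_v_sub).
move=> xQ yQ.
apply: (conn_sub (H_v (subsetIr Q S))) => //.
apply: hS => //.
  by move: xQ; rewrite inE => /andP[].
by move: yQ; rewrite inE => /andP[].
Qed.

Lemma inv_side_u : convex_inv S -> convex_inv (side_u T S u v).
Proof.
move=> hS Q hQ x y.
have -> : Q :&: side_u T S u v = (Q :&: S) :&: side_u T S u v.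
  by rewrite -setIA (setIidPr side_u_sub).
move=> xQ yQ.
apply: (conn_sub (H_u (subsetIr Q S))) => //.
apply: hS => //.
  by move: xQ; rewrite inE => /andP[].
by move: yQ; rewrite inE => /andP[].
Qed.

Variable E : {set Vt * Rc}.
Hypothesis Econn : forall r : Rc, tree_connected T [set v | (v, r) \in E].

Lemma key r : convex_inv S -> r \in recs_of E (side_u T S u v) ->
  r \in recs_of E (side_v T S u v) -> r \in recs E u :&: recs E v.
Proof.
move=> hS /bigcupP [x xu rx] /bigcupP [y yv ry].
set Q := [set w | (w, r) \in E].
have xQ : x \in Q by move: rx; rewrite !inE.
have yQ : y \in Q by move: ry; rewrite !inE.
have xS := subsetP side_u_sub _ xu; have yS := subsetP side_v_sub _ yv.
have cxy := hS Q (@Econn r) x y.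
have cyx := hS Q (@Econn r) y x.
have uvd : y \notin side_u T S u v by rewrite /side_u in_setD yv.
rewrite in_setI; apply/andP; split.
  case: (generic (H_u (subsetIr Q S)) (x := x) (y := y)).
  - by rewrite !in_setI xQ xS xu.
  - by apply: cxy; rewrite in_setI ?xQ ?yQ ?xS ?yS.
  - by move=> [yu _]; move: uvd; rewrite yu.
  - by move=> [uQ _]; move: uQ; rewrite !in_setI => /andP[/andP[+ _] _]; rewrite !inE.
case: (generic (H_v (subsetIr Q S)) (x := y) (y := x)).
- by rewrite !in_setI yQ yS yv.
- by apply: cyx; rewrite in_setI ?xQ ?yQ ?xS ?yS.
- by move=> [xv _]; move: xu; rewrite /side_u in_setD xv.
- by move=> [uQ _]; move: uQ; rewrite !in_setI => /andP[/andP[+ _] _]; rewrite !inE.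
Qed.

End Aux.

Section Main.
Variables (Vt Rc : finType) (F : realFieldType) (T : rel Vt) (E : {set Vt * Rc}) (delta : F).
Hypothesis Econn : forall r : Rc, tree_connected T [set v | (v, r) \in E].
Hypothesis hd : 0 < delta.

Lemma card_split S u v : convex_inv T S -> u \in S -> v \in S -> T u v ->
  (#|recs_of E (side_u T S u v)| + #|recs_of E (side_v T S u v)|
     <= #|recs_of E S| + wt E u v)%N.
Proof.
move=> hS uS vS Tuv; rewrite -cardsUI; apply: leq_add.
  apply: subset_leq_card; apply/subsetP => r; rewrite inE.
  case/orP => /bigcupP [x xs rx]; apply/bigcupP; exists x => //.
    exact: (subsetP (side_u_sub T S u v)).
  exact: (subsetP (side_v_sub T S u v)).
apply: subset_leq_card; apply/subsetP => r; rewrite inE => /andP[a b].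
exact: (key vS Econn hS a b).
Qed.

Lemma nedges_split S u v :
  nedges E S = (nedges E (side_u T S u v) + nedges E (side_v T S u v))%N.
Proof.
by rewrite /nedges (big_setID (side_v T S u v)) /= (setIidPr (side_v_sub T S u v)) addnC.
Qed.

Lemma main S n bs l : lyre E T delta S n bs l -> convex_inv T S ->
  [/\ \bigcup_(B <- bs) B = S,
      pairwise (fun A B : {set Vt} => [disjoint A & B]) bs,
      all (fun B : {set Vt} => (B != set0) && (B \subset S)) bs
    & [/\ (n <= l)%N,
      (storage_cost E bs)%:R <= (1 + delta) ^+ (l - n) * (#|recs_of E S|)%:R
    & (checkout_total E bs)%:R <= (nedges E S)%:R / delta]].
Proof.
elim=> {S n bs l}.
  move=> S n st _; split=> //; last split=> //.
  - by rewrite big_seq1.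
  - rewrite /= subxx andbT andbT; apply/eqP => S0; move: st.
    by rewrite /stop_cond S0 cards0 /nedges big_set0 !mul0r mulr0 ltxx.
  - by rewrite subnn expr0 mul1r /storage_cost big_seq1.
  - rewrite /checkout_total big_seq1 natrM mulrC; apply: ltW; exact: st.
move=> S n u v b1 l1 b2 l2 nst uS vS Tuv hw _ IH1 _ IH2 hS.
have [U1 P1 A1 [L1 S1 C1]] := IH1 (inv_side_u (u:=u) (v:=v) hS).
have [U2 P2 A2 [L2 S2 C2]] := IH2 (inv_side_v (u:=u) vS hS).
split.
- rewrite big_cat /= U1 U2; apply/setP => x; rewrite /side_u !inE.
  by case: (x \in S); case: (connect _ _ _).
- rewrite pairwise_cat P1 P2 !andbT; apply/allrelP => B1 B2 h1 h2.
  move: (allP A1 _ h1) (allP A2 _ h2) => /andP[_ s1] /andP[_ s2].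
  apply: (disjointWl s1); apply: (disjointWr s2).
  by rewrite disjoints_subset; apply/subsetP => x; rewrite /side_u in_setD in_setC => /andP[].
- rewrite all_cat; apply/andP; split; apply/allP => B hB.
    move/allP: A1 => /(_ B hB) /andP[-> s] /=; exact: subset_trans s (side_u_sub _ _ _ _).
  move/allP: A2 => /(_ B hB) /andP[-> s] /=; exact: subset_trans s (side_v_sub _ _ _ _).
have nm : (n < maxn l1 l2)%N by apply: leq_trans L1 (leq_maxl _ _).
split.
- exact: ltnW.
- rewrite /storage_cost big_cat natrD /=.
  set P := (1 + delta) ^+ (maxn l1 l2 - n.+1).
  have h1d : 1 <= 1 + delta by rewrite lerDl ltW.
  have e1 : (1 + delta) ^+ (l1 - n.+1) <= P.
    by apply: ler_weXn2l => //; apply: leq_sub2r; apply: leq_maxl.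
  have e2 : (1 + delta) ^+ (l2 - n.+1) <= P.
    by apply: ler_weXn2l => //; apply: leq_sub2r; apply: leq_maxr.
  have P0 : 0 <= P by apply: exprn_ge0; apply: le_trans h1d.
  apply: le_trans (lerD (le_trans S1 (ler_wpM2r (ler0n _ _) e1))
                        (le_trans S2 (ler_wpM2r (ler0n _ _) e2))) _.
  rewrite -mulrDr -subnSK // exprSr -mulrA; apply: ler_wpM2l => //.
  rewrite -natrD; apply: le_trans (_ : (#|recs_of E S| + wt E u v)%:R <= _).
    by rewrite ler_nat; apply: card_split.
  by rewrite natrD mulrDl mul1r lerD2l.
- rewrite /checkout_total big_cat natrD /= (nedges_split S u v) natrD mulrDl.
  exact: lerD.
Qed.

End Main.

Lemma nedges_all (Vt Rc : finType) (E : {set Vt * Rc}) : nedges E [set: Vt] = #|E|.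
Proof.
rewrite /nedges -sum1_card.
rewrite (eq_bigl (fun p => (p.1 \in [set: Vt]) && (p.2 \in [set r | (p.1, r) \in E]))); last first.
  by case=> a b; rewrite /= !inE.
rewrite -(pair_big_dep (fun a => a \in [set: Vt]) (fun a r => r \in [set r | (a, r) \in E]) (fun _ _ => 1%N)) /=.
by apply: eq_bigr => a _; rewrite sum1_card.
Qed.

Theorem theorem2 (Vt Rc : finType) (F : realFieldType) (T : rel Vt) (root : Vt)
    (E : {set Vt * Rc}) (delta : F) (blocks : seq {set Vt}) (l : nat) :
  is_rooted_tree T root ->
  (forall r : Rc, tree_connected T [set v | (v, r) \in E]) ->
  0 < delta <= 1 ->
  lyre E T delta [set: Vt] 0 blocks l ->
  [/\ (* the output is a partition of V into nonempty blocks *)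
      \bigcup_(B <- blocks) B = [set: Vt],
      pairwise (fun A B : {set Vt} => [disjoint A & B]) blocks,
      all (fun B : {set Vt} => B != set0) blocks,
      (* storage cost *)
      (storage_cost E blocks)%:R <= (1 + delta) ^+ l * (#|all_recs E|)%:R
    & (* average checkout cost *)
      (#|Vt|%:R)^-1 * (checkout_total E blocks)%:R
        <= delta^-1 * ((#|E|)%:R / (#|Vt|)%:R)].
Proof.
move=> _ Econn /andP[hd _] Hl.
have inv : convex_inv T [set: Vt] by move=> Q hQ; rewrite setIT.
have [U P A [_ St Ch]] := main Econn hd Hl inv.
split=> //.
- by apply/allP => B /(allP A) /andP[].
- by rewrite subn0 in St.
- rewrite nedges_all in Ch.
  have -> : delta^-1 * (#|E|%:R / #|Vt|%:R) = #|Vt|%:R^-1 * (#|E|%:R / delta) :> F.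
    by rewrite [LHS]mulrC -mulrA [RHS]mulrCA.
  by apply: ler_wpM2l => //; rewrite invr_ge0 ler0n.
Qed.
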